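(* For $d\le3$, $E>0$ and $\epsilon\in(0,1]$ there exists a constant $K_{d,\epsilon,E}$, with $E\mapsto K_{d,\epsilon,E}$ bounded on compact subsets of $(0,\infty)$, such that for $\sigma\in\{0,1\}$, $\eta>0$, $q\in\mathbb R^d$ and either choice of sign, $$\sup_{v_1,v_2\in\mathbb R^d}\prod_{j=1}^d\big\{\langle v_{1,j}\rangle^{-1+\epsilon}\langle v_{2,j}\rangle^{-1+\epsilon}\big\}\,|\nu(q+v_1)-E\pm i\eta|^{-1}\,|\nu(q+\sigma v_1+v_2)-E\pm i\eta|^{-1}\le K_{d,\epsilon,E}(1+\eta^{-2})\prod_{j=1}^d\langle q_j\rangle^{-1+\epsilon}.$$
   Context: $\nu(p)=\frac12|p|^2$ for $p\in\mathbb R^d$; for real $t$, $\langle t\rangle=(1+t^2)^{1/2}$; $v_{i,j}$ and $q_j$ denote coordinates. *)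

(* Defs.v *)
From Stdlib Require Import Reals.
From Coquelicot Require Import Coquelicot.
Open Scope R_scope.

(* vectors in R^d are functions nat -> R, coordinates 0..d-1 *)
Fixpoint sumR (n : nat) (f : nat -> R) : R :=
  match n with O => 0 | S m => sumR m f + f m end.
Fixpoint prodR (n : nat) (f : nat -> R) : R :=
  match n with O => 1 | S m => prodR m f * f m end.

Definition nu (d : nat) (p : nat -> R) : R := / 2 * sumR d (fun j => (p j) ^ 2).

Definition jbr (t : R) : R := sqrt (1 + t ^ 2).

Definition shiftC (x E eta : R) (s : bool) : C :=
  (RtoC x - RtoC E + (if s then RtoC eta * Ci else - (RtoC eta * Ci)))%C.

Definition vadd (u v : nat -> R) : nat -> R := fun j => u j + v j.
Definition vsig (sigma : bool) (v : nat -> R) : nat -> R :=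
  fun j => if sigma then v j else 0.

(* Main.v *)
Require Import Defs.
From Stdlib Require Import Reals Lra Psatz.
From Coquelicot Require Import Coquelicot.
Open Scope R_scope.

Lemma shiftC_bounds x E eta s : 0 < eta ->
  eta <= Cmod (shiftC x E eta s) /\ Rabs (x - E) <= Cmod (shiftC x E eta s).
Proof.
  intros He. pose proof (Rmax_Cmod (shiftC x E eta s)) as H.
  assert (Hf : fst (shiftC x E eta s) = x - E).
  { unfold shiftC; destruct s; simpl; ring. }
  assert (Hs : Rabs (snd (shiftC x E eta s)) = eta).
  { unfold shiftC; destruct s; simpl.
    - rewrite Rabs_pos_eq; lra.
    - rewrite Rabs_left; lra. }
  rewrite Hf, Hs in H. split; eapply Rle_trans; try apply H;
  [apply Rmax_r | apply Rmax_l].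
Qed.

Lemma jbr_ge1 x : 1 <= jbr x.
Proof. unfold jbr. rewrite <- sqrt_1 at 1. apply sqrt_le_1_alt. pose proof (pow2_ge_0 x); lra. Qed.

Lemma jbr_peetre x y : jbr x <= 2 * jbr (x + y) * jbr y.
Proof.
  unfold jbr. replace 2 with (sqrt 4).
  2:{ replace 4 with (2*2) by ring. rewrite sqrt_square; lra. }
  pose proof (pow2_ge_0 (x+y)). pose proof (pow2_ge_0 y).  pose proof (pow2_ge_0 (x+2*y)).
  assert (0 <= (x+y)^2 * y^2) by (apply Rmult_le_pos; lra).
  rewrite <- !sqrt_mult; try lra. apply sqrt_le_1_alt. nra.
Qed.

Definition F (a x : R) := Rpower (jbr x) a.

Lemma F_ge1 a x : 0 <= a -> 1 <= F a x.
Proof.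
  intros. unfold F. rewrite <- (Rpower_O (jbr x)) by (pose proof (jbr_ge1 x); lra).
  apply Rle_Rpower; auto using jbr_ge1.
Qed.

Lemma F_peetre a x y : 0 <= a <= 1 -> F a x <= 2 * F a (x + y) * F a y.
Proof.
  intros Ha. unfold F. pose proof (jbr_ge1 x). pose proof (jbr_ge1 y). pose proof (jbr_ge1 (x+y)).
  eapply Rle_trans. apply Rle_Rpower_l. lra. split. lra. apply jbr_peetre.
  assert (0 < 2 * jbr (x+y)) by lra. rewrite <- (Rpower_mult_distr (2 * jbr (x+y)) (jbr y) a) by lra.
  rewrite <- (Rpower_mult_distr 2 (jbr (x+y)) a) by lra.
  apply Rmult_le_compat_r. unfold Rpower; left; apply exp_pos.
  apply Rmult_le_compat_r. unfold Rpower; left; apply exp_pos.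
  replace 2 with (Rpower 2 1) at 2 by (apply Rpower_1; lra).
  apply Rle_Rpower; lra.
Qed.

Lemma F_pow4 a x : 0 <= a <= 1/2 -> F a x ^ 4 <= 1 + x ^ 2.
Proof.
  intros Ha. unfold F. pose proof (jbr_ge1 x).
  rewrite <- Rpower_pow by (unfold Rpower; apply exp_pos).
  rewrite Rpower_mult.
  replace (1 + x^2) with (jbr x ^ 2).
  2:{ unfold jbr. rewrite pow2_sqrt; [reflexivity | pose proof (pow2_ge_0 x); lra]. }
  rewrite <- Rpower_pow by lra. apply Rle_Rpower. lra. simpl. lra.
Qed.

Lemma jbr_pow a x : Rpower (jbr x) (- (2*a)) = / (F a x * F a x).
Proof.
  rewrite Rpower_Ropp. unfold F. rewrite <- Rpower_plus. f_equal; f_equal; ring.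
Qed.

Lemma prodR_ext n f g : (forall j, f j = g j) -> prodR n f = prodR n g.
Proof. intros H; induction n; simpl; [reflexivity | rewrite IHn, H; reflexivity]. Qed.

Lemma prodR_mult n f g : prodR n (fun j => f j * g j) = prodR n f * prodR n g.
Proof. induction n; cbn [prodR]. ring. rewrite IHn; ring. Qed.

Lemma prodR_const n c : prodR n (fun _ => c) = c ^ n.
Proof. induction n; cbn [prodR pow]. ring. rewrite IHn; ring. Qed.

Lemma prodR_le n f g : (forall j, 0 <= f j <= g j) -> 0 <= prodR n f <= prodR n g.
Proof.
  intros H; induction n; simpl. lra.
  destruct IHn. destruct (H n). split. apply Rmult_le_pos; lra.
  apply Rmult_le_compat; lra.
Qed.

Lemma prodR_ge1 n f : (forall j, 1 <= f j) -> 1 <= prodR n f.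
Proof.
  intros H; induction n; simpl. lra.
  pose proof (H n). replace 1 with (1*1) by ring. apply Rmult_le_compat; lra.
Qed.

Lemma prodR_pow4 n f : prodR n (fun j => f j ^ 4) = prodR n f ^ 4.
Proof. induction n; cbn [prodR]. ring. rewrite IHn; ring. Qed.

Lemma sumR_nonneg n p : 0 <= sumR n (fun j => p j ^ 2).
Proof. induction n; cbn [sumR]. lra. pose proof (pow2_ge_0 (p n)). lra. Qed.

Lemma prodR_sum n p : prodR n (fun j => 1 + p j ^ 2) <= (1 + sumR n (fun j => p j ^ 2)) ^ n.
Proof.
  induction n. cbn. lra.
  cbn [prodR sumR]. rewrite <- (tech_pow_Rmult _ n).
  pose proof (sumR_nonneg n p). pose proof (pow2_ge_0 (p n)).
  assert (1 <= prodR n (fun j => 1 + p j ^ 2)).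
  { apply prodR_ge1. intros j. pose proof (pow2_ge_0 (p j)). lra. }
  assert (1 <= (1 + sumR n (fun j => p j ^ 2)) ^ n).
  { apply pow_R1_Rle. lra. }
  assert ((1 + sumR n (fun j => p j ^ 2)) ^ n <= (1 + (sumR n (fun j => p j ^ 2) + p n ^ 2)) ^ n).
  { apply pow_incr. lra. }
  rewrite (Rmult_comm (prodR _ _)). apply Rmult_le_compat; lra.
Qed.

Lemma pow4_le_inv G u : 0 <= G -> 0 <= u -> G ^ 4 <= u ^ 4 -> G <= u.
Proof.
  intros HG Hu H. destruct (Rle_or_lt G u) as [|Hlt]; auto. exfalso.
  assert (u ^ 3 <= G ^ 3) by (apply pow_incr; lra).
  assert (0 < G ^ 3) by (apply pow_lt; lra).
  assert (u * u ^ 3 < G * G ^ 3).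
  { apply Rle_lt_trans with (u * G ^ 3). apply Rmult_le_compat_l; lra.
    apply Rmult_lt_compat_r; lra. }
  simpl in *. lra.
Qed.

Lemma G_bound d a p : (d <= 3)%nat -> 0 <= a <= 1/2 ->
  prodR d (fun j => F a (p j)) <= 1 + 2 * nu d p.
Proof.
  intros Hd Ha. unfold nu. replace (1 + 2 * (/2 * sumR d (fun j => p j ^ 2)))
    with (1 + sumR d (fun j => p j ^ 2)) by field.
  pose proof (sumR_nonneg d p).
  apply pow4_le_inv.
  - pose proof (prodR_ge1 d (fun j => F a (p j)) (fun j => F_ge1 a (p j) (proj1 Ha))). lra.
  - lra.
  - rewrite <- prodR_pow4.
    eapply Rle_trans. apply (prodR_le d _ (fun j => 1 + p j ^ 2)).
    intros j. split. apply pow_le. pose proof (F_ge1 a (p j)). lra. apply F_pow4; auto.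
    eapply Rle_trans. apply prodR_sum. apply Rle_pow. lra. lia.
Qed.

Lemma F_even a x : F a (- x) = F a x.
Proof. unfold F, jbr. f_equal. f_equal. ring. Qed.

Lemma coord a q v1 v2 (sg : bool) : 0 <= a <= 1/2 ->
  / (F a v1 * F a v1) * / (F a v2 * F a v2) <=
  8 * (F a (q + v1) * F a (q + (if sg then v1 else 0) + v2)) * / (F a q * F a q).
Proof.
  intros Ha.
  assert (Ha' : 0 <= a <= 1) by lra.
  pose proof (F_ge1 a v1 (proj1 Ha)) as A1.
  pose proof (F_ge1 a v2 (proj1 Ha)) as A2.
  pose proof (F_ge1 a q (proj1 Ha)) as A3.
  pose proof (F_ge1 a (q + v1) (proj1 Ha)) as A4.
  set (w := if sg then v1 else 0).
  pose proof (F_ge1 a (q + w + v2) (proj1 Ha)) as A5.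
  pose proof (F_ge1 a w (proj1 Ha)) as A6.
  pose proof (F_ge1 a (w + v2) (proj1 Ha)) as A7.
  assert (Hw : F a w <= F a v1).
  { unfold w; destruct sg. lra. unfold F at 1. replace (jbr 0) with 1.
    unfold Rpower. rewrite ln_1, Rmult_0_r, exp_0. lra.
    unfold jbr. replace (1 + 0 ^ 2) with 1 by ring. symmetry; apply sqrt_1. }
  pose proof (F_peetre a q v1 Ha') as P1.
  pose proof (F_peetre a q (w + v2) Ha') as P2.
  rewrite <- Rplus_assoc in P2.
  pose proof (F_peetre a (w + v2) (- v2) Ha') as P3.
  replace (w + v2 + - v2) with w in P3 by ring. rewrite F_even in P3.
  set (A := F a v1) in *. set (B := F a v2) in *. set (Q := F a q) in *.
  set (X1 := F a (q + v1)) in *. set (X2 := F a (q + w + v2)) in *.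
  set (W := F a w) in *. set (Y := F a (w + v2)) in *.
  assert (HQ2 : Q <= 4 * X2 * W * B).
  { eapply Rle_trans. apply P2. 
    replace (4 * X2 * W * B) with (2 * X2 * (2 * W * B)) by ring.
    apply Rmult_le_compat_l. lra. exact P3. }
  assert (HQ : Q * Q <= (2 * X1 * A) * (4 * X2 * W * B)).
  { apply Rmult_le_compat; lra. }
  assert (HQ' : Q * Q <= 8 * (X1 * X2) * (A * A * (B * B))).
  { eapply Rle_trans. apply HQ.
    replace ((2 * X1 * A) * (4 * X2 * W * B)) with ((8 * (X1 * X2) * A) * (W * B)) by ring.
    replace (8 * (X1 * X2) * (A * A * (B * B))) with ((8 * (X1 * X2) * A) * (A * (B * B))) by ring.
    apply Rmult_le_compat_l.
    { assert (0 <= X1 * X2) by (apply Rmult_le_pos; lra).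
      apply Rmult_le_pos; lra. }
    apply Rmult_le_compat; try lra.
    replace B with (1 * B) at 1 by ring.
    apply Rmult_le_compat; lra. }
  assert (0 < A * A) by (apply Rmult_lt_0_compat; lra).
  assert (0 < B * B) by (apply Rmult_lt_0_compat; lra).
  assert (0 < Q * Q) by (apply Rmult_lt_0_compat; lra).
  replace (/ (A * A) * / (B * B)) with ((Q * Q) * / (A * A * (B * B) * (Q * Q)))
    by (field; split; lra).
  replace (8 * (X1 * X2) * / (Q * Q)) with
    ((8 * (X1 * X2) * (A * A * (B * B))) * / (A * A * (B * B) * (Q * Q)))
    by (field; split; [|split]; lra).
  apply Rmult_le_compat_r; [|exact HQ'].
  left. apply Rinv_0_lt_compat. apply Rmult_lt_0_compat; auto. apply Rmult_lt_0_compat; auto.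
Qed.

Lemma z_bound d a p E eta s : (d <= 3)%nat -> 0 <= a <= 1/2 -> 0 < E -> 0 < eta ->
  prodR d (fun j => F a (p j)) * / Cmod (shiftC (nu d p) E eta s) <= (3 + 2 * E) * (1 + / eta).
Proof.
  intros Hd Ha HE Heta.
  pose proof (G_bound d a p Hd Ha) as HG.
  destruct (shiftC_bounds (nu d p) E eta s Heta) as [C1 C2].
  set (c := Cmod (shiftC (nu d p) E eta s)) in *.
  set (G := prodR d (fun j => F a (p j))) in *.
  assert (Hc : 0 < c) by lra.
  assert (Ht : 1 <= c * / eta).
  { replace 1 with (eta * / eta) by (field; lra). apply Rmult_le_compat_r.
    left; apply Rinv_0_lt_compat; lra. lra. }
  assert (Hab : nu d p - E <= c) by (eapply Rle_trans; [apply Rle_abs|exact C2]).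
  assert (HG' : G <= (3 + 2 * E) * (1 + / eta) * c).
  { replace ((3 + 2 * E) * (1 + / eta) * c) with ((3 + 2 * E) * c + (3 + 2 * E) * (c * / eta)) by ring.
    assert ((1 + 2 * E) * 1 <= (1 + 2 * E) * (c * / eta)) by (apply Rmult_le_compat_l; lra).
    assert (0 <= (1 + 2 * E) * c) by (apply Rmult_le_pos; lra).
    assert (0 <= 2 * (c * / eta)) by lra.
    lra. }
  apply Rmult_le_reg_r with c; auto.
  rewrite Rmult_assoc, Rinv_l by lra. lra.
Qed.

Theorem lemma23 (d : nat) (eps : R) :
  (d <= 3)%nat -> 0 < eps <= 1 ->
  exists K : R -> R,
    (* E |-> K E is bounded on compact subsets of (0, oo) *)
    (forall a b, 0 < a -> a <= b ->
       exists M, forall E, a <= E <= b -> Rabs (K E) <= M) /\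
    (forall (E : R), 0 < E ->
     forall (sigma : bool) (eta : R), 0 < eta ->
     forall (q : nat -> R) (s : bool),
     (* the supremum over v1, v2 is bounded by the right-hand side *)
     forall v1 v2 : nat -> R,
       prodR d (fun j => Rpower (jbr (v1 j)) (-1 + eps)
                         * Rpower (jbr (v2 j)) (-1 + eps))
       * / Cmod (shiftC (nu d (vadd q v1)) E eta s)
       * / Cmod (shiftC (nu d (vadd (vadd q (vsig sigma v1)) v2)) E eta s)
       <= K E * (1 + / eta ^ 2) * prodR d (fun j => Rpower (jbr (q j)) (-1 + eps))).
Proof.
  intros Hd Heps.
  exists (fun E => 1024 * (3 + 2 * E) ^ 2). split.
  { intros a b Ha Hab. exists (1024 * (3 + 2 * b) ^ 2). intros E HE.
    rewrite Rabs_pos_eq. 2:{ apply Rmult_le_pos. lra. apply pow2_ge_0. }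
    apply Rmult_le_compat_l. lra. apply pow_incr. lra. }
  intros E HE sigma eta Heta q s v1 v2.
  set (a := (1 - eps) / 2).
  assert (Ha : 0 <= a <= 1/2) by (unfold a; lra).
  assert (He : -1 + eps = - (2 * a)) by (unfold a; field).
  rewrite He.
  set (p1 := vadd q v1). set (p2 := vadd (vadd q (vsig sigma v1)) v2).
  set (c1 := Cmod (shiftC (nu d p1) E eta s)).
  set (c2 := Cmod (shiftC (nu d p2) E eta s)).
  set (G1 := prodR d (fun j => F a (p1 j))).
  set (G2 := prodR d (fun j => F a (p2 j))).
  set (Q := prodR d (fun j => Rpower (jbr (q j)) (- (2 * a)))).
  assert (HQ : Q = prodR d (fun j => / (F a (q j) * F a (q j)))).
  { apply prodR_ext. intros j. apply jbr_pow. }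
  assert (Hprod : prodR d (fun j => Rpower (jbr (v1 j)) (- (2 * a)) * Rpower (jbr (v2 j)) (- (2 * a)))
                  <= 8 ^ d * G1 * G2 * Q).
  { rewrite (prodR_ext d _ (fun j => / (F a (v1 j) * F a (v1 j)) * / (F a (v2 j) * F a (v2 j)))).
    2:{ intros j. rewrite !jbr_pow. reflexivity. }
    eapply Rle_trans. eapply proj2. apply prodR_le.
    { intros j. split. 
      - pose proof (F_ge1 a (v1 j) (proj1 Ha)). pose proof (F_ge1 a (v2 j) (proj1 Ha)).
        apply Rmult_le_pos; left; apply Rinv_0_lt_compat; apply Rmult_lt_0_compat; lra.
      - apply (coord a (q j) (v1 j) (v2 j) sigma Ha). }
    rewrite !prodR_mult, prodR_const, HQ. unfold G1, G2, p1, p2, vadd, vsig. cbv beta. right. ring. }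
  pose proof (z_bound d a p1 E eta s Hd Ha HE Heta) as Z1.
  pose proof (z_bound d a p2 E eta s Hd Ha HE Heta) as Z2.
  fold c1 c2 G1 G2 in Z1, Z2.
  destruct (shiftC_bounds (nu d p1) E eta s Heta) as [C1 _].
  destruct (shiftC_bounds (nu d p2) E eta s Heta) as [C2 _].
  fold c1 in C1. fold c2 in C2.
  assert (HQ0 : 0 <= Q).
  { rewrite HQ. apply proj1 with (B := prodR d (fun j => / (F a (q j) * F a (q j))) <= prodR d (fun j => / (F a (q j) * F a (q j)))). apply prodR_le. intros j.
    pose proof (F_ge1 a (q j) (proj1 Ha)). split; [|lra].
    left; apply Rinv_0_lt_compat; apply Rmult_lt_0_compat; lra. }
  assert (HG1 : 0 <= G1).
  { pose proof (prodR_ge1 d (fun j => F a (p1 j)) (fun j => F_ge1 a (p1 j) (proj1 Ha))). unfold G1. lra. }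
  assert (HG2 : 0 <= G2).
  { pose proof (prodR_ge1 d (fun j => F a (p2 j)) (fun j => F_ge1 a (p2 j) (proj1 Ha))). unfold G2. lra. }
  assert (H8 : 8 ^ d <= 512).
  { replace 512 with (8 ^ 3) by ring. apply Rle_pow. lra. exact Hd. }
  assert (Hi1 : 0 < / c1) by (apply Rinv_0_lt_compat; lra).
  assert (Hi2 : 0 < / c2) by (apply Rinv_0_lt_compat; lra).
  set (L := (3 + 2 * E) * (1 + / eta)) in *.
  assert (Hie : 0 < / eta) by (apply Rinv_0_lt_compat; lra).
  assert (HL2 : (1 + / eta) ^ 2 <= 2 * (1 + / eta ^ 2)).
  { pose proof (pow2_ge_0 (1 - / eta)). 
    replace (/ (eta ^ 2)) with (/ eta * / eta) by (field; lra). nra. }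
  eapply Rle_trans.
  { apply Rmult_le_compat_r. lra. apply Rmult_le_compat_r. lra. exact Hprod. }
  replace (8 ^ d * G1 * G2 * Q * / c1 * / c2) with (8 ^ d * Q * ((G1 * / c1) * (G2 * / c2))) by ring.
  assert (HZ : (G1 * / c1) * (G2 * / c2) <= L * L).
  { apply Rmult_le_compat; auto; apply Rmult_le_pos; lra. }
  assert (HLL : L * L = (3 + 2 * E) ^ 2 * (1 + / eta) ^ 2) by (unfold L; ring).
  assert (0 <= (3 + 2 * E) ^ 2) by apply pow2_ge_0.
  assert (HLL2 : L * L <= (3 + 2 * E) ^ 2 * (2 * (1 + / eta ^ 2))).
  { rewrite HLL. apply Rmult_le_compat_l; auto. }
  assert (0 <= (G1 * / c1) * (G2 * / c2)) by (apply Rmult_le_pos; apply Rmult_le_pos; lra).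
  assert (0 <= 8 ^ d) by (apply pow_le; lra).
  assert (HA : 8 ^ d * ((G1 * / c1) * (G2 * / c2)) <= 512 * ((3 + 2 * E) ^ 2 * (2 * (1 + / eta ^ 2)))).
  { apply Rmult_le_compat; lra. }
  replace (1024 * (3 + 2 * E) ^ 2 * (1 + / eta ^ 2) * Q) with
    (Q * (512 * ((3 + 2 * E) ^ 2 * (2 * (1 + / eta ^ 2))))) by ring.
  replace (8 ^ d * Q * (G1 * / c1 * (G2 * / c2))) with (Q * (8 ^ d * ((G1 * / c1) * (G2 * / c2)))) by ring.
  apply Rmult_le_compat_l; lra.
Qed.
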